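(* Let $\mathcal M=\{A,B,C,D\}$ be a minimal realization of a discrete-time passive system and let $X\in\mathbb X^{>}(\mathcal M)$. Then there is a unique maximal real number $\xi^*(X)$ such that the matrix inequality $$\widetilde W(X,\mathcal M)\ \ge\ \xi\,\operatorname{diag}(X,X,2I_m)$$ holds for $\xi=\xi^*(X)$, and $\xi^*(X)<1$. Moreover, writing $X=T^{\mathsf H}T$ with $T$ nonsingular, $\xi^*(X)=\lambda_{\min}\big(D_s\widetilde W(I_n,\mathcal M_T)D_s\big)$.
   Context: A discrete-time model is $\mathcal M=\{A,B,C,D\}$ with $A\in\mathbb C^{n\times n}$, $B\in\mathbb C^{n\times m}$, $C\in\mathbb C^{m\times n}$, $D\in\mathbb C^{m\times m}$ (system $x_{k+1}=Ax_k+Bu_k$, $y_k=Cx_k+Du_k$), with transfer function $\mathcal T(z)=C(zI_n-A)^{-1}B+D$. It is minimal if $\operatorname{rank}[zI_n-A\ \ B]=n$ and $\operatorname{rank}[zI_n-A^{\mathsf H}\ \ C^{\mathsf H}]=n$ for all $z\in\mathbb C$. The system is passive if $\mathcal T(e^{\imath\omega})^{\mathsf H}+\mathcal T(e^{\imath\omega})\ge0$ for all $\omega\in[-\pi,\pi]$ and all eigenvalues of $A$ lie in the closed unit disc with those on the unit circle semisimple. $\mathbb H_n$ is the set of $n\times n$ Hermitian matrices. For $X\in\mathbb H_n$, $$W(X,\mathcal M)=\begin{bmatrix} X-A^{\mathsf H}XA & C^{\mathsf H}-A^{\mathsf H}XB\\ C-B^{\mathsf H}XA & D^{\mathsf H}+D-B^{\mathsf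 H}XB\end{bmatrix},\qquad \widetilde W(X,\mathcal M)=\begin{bmatrix} X & XA & XB\\ A^{\mathsf H}X & X & C^{\mathsf H}\\ B^{\mathsf H}X & C & D^{\mathsf H}+D\end{bmatrix},$$ and $\mathbb X^{>}(\mathcal M)=\{X\in\mathbb H_n: W(X,\mathcal M)\ge0,\ X>0\}$. $D_s=\operatorname{diag}(I_n,I_n,I_m/\sqrt2)$; for nonsingular $T$, $\mathcal M_T=\{TAT^{-1},TB,CT^{-1},D\}$. *)

(* Defs.v *)
(* Complex scalars: an arbitrary numClosedFieldType C
   (the complex numbers are one instance). *)
From HB Require Import structures.
From mathcomp Require Import all_boot all_order all_algebra.
Set Implicit Arguments. Unset Strict Implicit. Unset Printing Implicit Defensive.
Import Order.TTheory GRing.Theory Num.Theory.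
Local Open Scope ring_scope.

Section Defs.
Variable C : numClosedFieldType.

Definition ctmx (p q : nat) (A : 'M[C]_(p, q)) : 'M[C]_(q, p) := (map_mx Num.conj A)^T.

Definition hermitian (p : nat) (M : 'M[C]_p) : Prop := ctmx M = M.

Definition psd (p : nat) (M : 'M[C]_p) : Prop :=
  hermitian M /\ forall v : 'cV[C]_p, 0 <= (ctmx v *m M *m v) 0 0.

Definition pd (p : nat) (M : 'M[C]_p) : Prop :=
  hermitian M /\ forall v : 'cV[C]_p, v != 0 -> 0 < (ctmx v *m M *m v) 0 0.

Definition loewner_ge (p : nat) (M1 M2 : 'M[C]_p) : Prop := psd (M1 - M2).

Definition transfer (n m : nat) (A : 'M[C]_n) (B : 'M[C]_(n, m))
  (Cm : 'M[C]_(m, n)) (D : 'M[C]_m) (z : C) : 'M[C]_m :=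
  Cm *m invmx (z%:M - A) *m B + D.

Definition minimal (n m : nat) (A : 'M[C]_n) (B : 'M[C]_(n, m))
  (Cm : 'M[C]_(m, n)) : Prop :=
  forall z : C, \rank (row_mx (z%:M - A) B) = n /\
                \rank (row_mx (z%:M - ctmx A) (ctmx Cm)) = n.

Definition semisimple_eig (n : nat) (A : 'M[C]_n) (l : C) : Prop :=
  mup l (char_poly A) = \rank (eigenspace A l).

Definition passive (n m : nat) (A : 'M[C]_n) (B : 'M[C]_(n, m))
  (Cm : 'M[C]_(m, n)) (D : 'M[C]_m) : Prop :=
  (forall z : C, `|z| = 1 -> (z%:M - A) \in unitmx ->
     psd (ctmx (transfer A B Cm D z) + transfer A B Cm D z)) /\
  (forall l : C, eigenvalue A l -> `|l| <= 1 /\ (`|l| = 1 -> semisimple_eig A l)).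

Definition Wmat (n m : nat) (A : 'M[C]_n) (B : 'M[C]_(n, m))
  (Cm : 'M[C]_(m, n)) (D : 'M[C]_m) (X : 'M[C]_n) : 'M[C]_(n + m) :=
  block_mx (X - ctmx A *m X *m A) (ctmx Cm - ctmx A *m X *m B)
           (Cm - ctmx B *m X *m A) (ctmx D + D - ctmx B *m X *m B).

Definition Wtilde (n m : nat) (A : 'M[C]_n) (B : 'M[C]_(n, m))
  (Cm : 'M[C]_(m, n)) (D : 'M[C]_m) (X : 'M[C]_n) : 'M[C]_(n + n + m) :=
  block_mx (block_mx X (X *m A) (ctmx A *m X) X)
           (col_mx (X *m B) (ctmx Cm))
           (row_mx (ctmx B *m X) Cm)
           (ctmx D + D).

Definition Xgt (n m : nat) (A : 'M[C]_n) (B : 'M[C]_(n, m))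
  (Cm : 'M[C]_(m, n)) (D : 'M[C]_m) (X : 'M[C]_n) : Prop :=
  hermitian X /\ psd (Wmat A B Cm D X) /\ pd X.

Definition diagXX2 (n m : nat) (X : 'M[C]_n) : 'M[C]_(n + n + m) :=
  block_mx (block_mx X 0 0 X) 0 0 (2%:M).

Definition Ds (n m : nat) : 'M[C]_(n + n + m) :=
  block_mx 1%:M 0 0 ((sqrtC 2)^-1)%:M.

Definition is_lambda_min (p : nat) (M : 'M[C]_p) (l : C) : Prop :=
  eigenvalue M l /\ forall mu : C, eigenvalue M mu -> l <= mu.

End Defs.

(* Main.v *)
Require Import Defs.
From HB Require Import structures.
From mathcomp Require Import all_boot all_order all_algebra.
From mathcomp Require Import sesquilinear spectral ring.
Require Import Defs.
Import Order.TTheory GRing.Theory Num.Theory Num.Def.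
Local Open Scope ring_scope.
Local Open Scope sesquilinear_scope.
Set Implicit Arguments. Unset Strict Implicit. Unset Printing Implicit Defensive.

Section Aux.
Variable C : numClosedFieldType.
Implicit Types (p q r : nat).

Lemma ctmxE p q (A : 'M[C]_(p,q)) i j : ctmx A i j = (A j i)^*.
Proof. by rewrite /ctmx !mxE. Qed.

Lemma ctmxK p q (A : 'M[C]_(p,q)) : ctmx (ctmx A) = A.
Proof. by apply/matrixP=> i j; rewrite !ctmxE conjCK. Qed.

Lemma ctmxM p q r (A : 'M[C]_(p,q)) (B : 'M[C]_(q,r)) :
  ctmx (A *m B) = ctmx B *m ctmx A.
Proof. by rewrite /ctmx map_mxM trmx_mul. Qed.

Lemma ctmxD p q (A B : 'M[C]_(p,q)) : ctmx (A + B) = ctmx A + ctmx B.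
Proof. by apply/matrixP=> i j; rewrite !(ctmxE, mxE) rmorphD. Qed.

Lemma ctmxN p q (A : 'M[C]_(p,q)) : ctmx (- A) = - ctmx A.
Proof. by apply/matrixP=> i j; rewrite !(ctmxE, mxE) rmorphN. Qed.

Lemma ctmxB p q (A B : 'M[C]_(p,q)) : ctmx (A - B) = ctmx A - ctmx B.
Proof. by rewrite ctmxD ctmxN. Qed.

Lemma ctmxZ p q a (A : 'M[C]_(p,q)) : ctmx (a *: A) = a^* *: ctmx A.
Proof. by apply/matrixP=> i j; rewrite !(ctmxE, mxE) rmorphM. Qed.

Lemma ctmx_scalar p a : ctmx (a%:M : 'M[C]_p) = a^*%:M.
Proof. by apply/matrixP=> i j; rewrite !(ctmxE, mxE) rmorphMn eq_sym. Qed.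

Lemma ctmx0 p q : ctmx (0 : 'M[C]_(p,q)) = 0.
Proof. by apply/matrixP=> i j; rewrite !(ctmxE, mxE) rmorph0. Qed.

Lemma ctmx1 p : ctmx (1%:M : 'M[C]_p) = 1%:M.
Proof. by rewrite ctmx_scalar rmorph1. Qed.

Lemma ctmx_block p1 p2 q1 q2 (A : 'M[C]_(p1,q1)) (B : 'M[C]_(p1,q2))
  (Cc : 'M[C]_(p2,q1)) (D : 'M[C]_(p2,q2)) :
  ctmx (block_mx A B Cc D) = block_mx (ctmx A) (ctmx Cc) (ctmx B) (ctmx D).
Proof. by rewrite /ctmx map_block_mx tr_block_mx. Qed.

Lemma ctmx_row p q1 q2 (A : 'M[C]_(p,q1)) (B : 'M[C]_(p,q2)) :
  ctmx (row_mx A B) = col_mx (ctmx A) (ctmx B).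
Proof. by rewrite /ctmx map_row_mx tr_row_mx. Qed.

Lemma ctmx_col p1 p2 q (A : 'M[C]_(p1,q)) (B : 'M[C]_(p2,q)) :
  ctmx (col_mx A B) = row_mx (ctmx A) (ctmx B).
Proof. by rewrite /ctmx map_col_mx tr_col_mx. Qed.

Lemma ctmx_unit p (A : 'M[C]_p) : (ctmx A \in unitmx) = (A \in unitmx).
Proof. by rewrite /ctmx unitmx_tr map_unitmx. Qed.

Lemma ctmx_inv p (A : 'M[C]_p) : ctmx (invmx A) = invmx (ctmx A).
Proof. by rewrite /ctmx map_invmx trmx_inv. Qed.

Lemma ctmx_tc p q (A : 'M[C]_(p,q)) : ctmx A = A ^t conjC.
Proof. by rewrite /ctmx map_trmx. Qed.


Lemma herm_hermsym N (H : 'M[C]_N) : hermitian H -> H \is hermsymmx.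
Proof. by rewrite /hermitian => hH; apply/is_hermitianmxP; rewrite expr0 scale1r -ctmx_tc hH. Qed.

Lemma fin_min N (f : 'I_N -> C) : (0 < N)%N -> (forall i, f i \is Num.real) ->
  exists i, forall j, f i <= f j.
Proof.
move=> hN fr.
have main : forall (s : seq 'I_N) (x : 'I_N),
    exists2 i, i \in x :: s & forall j, j \in x :: s -> f i <= f j.
  elim => [|y s IH] x.
    by exists x; [rewrite mem_head | move=> j; rewrite inE => /eqP ->].
  have [i ii hi] := IH y.
  case/orP: (real_leVge (fr x) (fr i)) => h.
    exists x; first by rewrite mem_head.
    move=> j; rewrite inE => /orP [/eqP -> // | js]; exact: le_trans h (hi j js).
  exists i; first by rewrite inE ii orbT.
  by move=> j; rewrite inE => /orP [/eqP -> // | js]; exact: hi.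
have [i _ hi] := main (enum 'I_N) (Ordinal hN).
by exists i => j; apply: hi; rewrite inE mem_enum orbT.
Qed.

Lemma quad_diag N (u : 'cV[C]_N) (e : 'rV[C]_N) :
  (ctmx u *m diag_mx e *m u) 0 0 = \sum_i e 0 i * (`|u i 0| ^+ 2).
Proof.
rewrite mxE; apply: eq_bigr => i _.
rewrite mul_mx_diag !mxE normCK; ring.
Qed.

Lemma herm_min N (H : 'M[C]_N) : (0 < N)%N -> hermitian H ->
  exists l, [/\ l \is Num.real, eigenvalue H l,
    (forall mu, eigenvalue H mu -> l <= mu) &
    forall xi, xi \is Num.real -> (psd (H - xi%:M) <-> xi <= l)].
Proof.
move=> hN hH.
have hs := herm_hermsym hH.
have /orthomx_spectralP HE := hermitian_normalmx hs.
move: HE; set P := spectralmx H; set d := spectral_diag H => HE.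
have Pu : P \is unitarymx := spectral_unitarymx H.
have PU : P \in unitmx := spectral_unit H.
have iP : invmx P = ctmx P by rewrite invmx_unitary // ctmx_tc.
have dr : forall i, d 0 i \is Num.real.
  by move=> i; have /mxOverP := hermitian_spectral_diag_real hs; apply.
have [i0 hi0] := fin_min hN dr.
have quad : forall (xi : C) (v : 'cV[C]_N), (ctmx v *m (H - xi%:M) *m v) 0 0 =
    \sum_i (d 0 i - xi) * `|(P *m v) i 0| ^+ 2.
  move=> xi v.
  have -> : H - xi%:M = ctmx P *m (diag_mx (d - const_mx xi)) *m P.
    rewrite linearB /= diag_const_mx mulmxBr mulmxBl -iP -HE; congr (_ - _).
    by rewrite iP -mulmxA mul_scalar_mx -scalemxAr -iP mulVmx // scalemx1.
  rewrite !mulmxA -ctmxM -mulmxA quad_diag; apply: eq_bigr => i _.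
  by rewrite !mxE.
exists (d 0 i0); split.
- exact: dr.
- apply/eigenvalueP; exists (delta_mx 0 i0 *m P).
    rewrite HE !mulmxA mulmxK // scalemxAl; congr (_ *m _).
    apply/matrixP => i j; rewrite mul_mx_diag !mxE ord1 eqxx /=.
    by case: eqP => [->|_]; rewrite ?mulr0 ?mul0r // mulr1 mul1r.
  apply/eqP => h0.
  move: h0 => /(congr1 (mulmx^~ (invmx P))); rewrite mulmxK // mul0mx => /matrixP /(_ 0 i0).
  by rewrite !mxE !eqxx /= => /eqP; rewrite oner_eq0.
- move=> mu /eigenvalueP [v hv vn0].
  set w := v *m invmx P.
  have hw : w *m diag_mx d = mu *: w.
    have : v *m H *m invmx P = mu *: w by rewrite hv scalemxAl.
    by rewrite HE !mulmxA mulmxK.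
  have wn0 : w != 0.
    apply/eqP => h0; move: vn0; rewrite -(mulmxKV PU v) -/w h0 mul0mx eqxx //.
  clearbody w.
  have [j hj] : exists j, w 0 j != 0.
    apply/existsP; move: wn0; apply: contraR; rewrite negb_exists => /forallP h.
    apply/eqP/matrixP => i j; rewrite ord1; move: (h j); rewrite negbK => /eqP ->; by rewrite mxE.
  have := congr1 (fun M : 'M[C]_(1,N) => M 0 j) hw; rewrite /= mul_mx_diag !mxE => e.
  have -> : mu = d 0 j by apply: (mulIf hj); rewrite -e mulrC.
  exact: hi0.
- move=> xi xr; split.
  + move=> [_ hq]; have := hq (ctmx P *m delta_mx i0 0).
    rewrite quad mulmxA -iP mulmxV // mul1mx (bigD1 i0) //= big1.
      by rewrite !mxE !eqxx /= normr1 expr1n mulr1 addr0 subr_ge0.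
    move=> i /negbTE hi; by rewrite !mxE hi /= normr0 expr0n /= mulr0.
  + move=> hxi; split.
      rewrite /hermitian ctmxB ctmx_scalar (conj_Creal xr).
      by move: hH; rewrite /hermitian => ->.
    move=> v; rewrite quad; apply: sumr_ge0 => i _.
    apply: mulr_ge0; last by rewrite exprn_ge0.
    by rewrite subr_ge0; apply: le_trans hxi (hi0 i).
Qed.


Lemma psd_congr N (M S : 'M[C]_N) : S \in unitmx ->
  psd M <-> psd (ctmx S *m M *m S).
Proof.
move=> SU; split.
- move=> [hM hq]; split.
    by rewrite /hermitian !ctmxM ctmxK hM mulmxA.
  by move=> v; have := hq (S *m v); rewrite ctmxM !mulmxA.
- move=> [hM hq]; split.
    move: hM; rewrite /hermitian !ctmxM ctmxK mulmxA => e.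
    have := congr1 (fun Y => invmx (ctmx S) *m Y *m invmx S) e.
    by rewrite !mulmxA !mulmxK // mulVmx ?ctmx_unit // !mul1mx.
  move=> v; have := hq (invmx S *m v).
  by rewrite ctmxM ctmx_inv !mulmxA mulmxKV ?ctmx_unit // mulmxK.
Qed.

Lemma bil_delta N (M : 'M[C]_N) (i j : 'I_N) :
  (ctmx (delta_mx i 0 : 'cV[C]_N) *m M *m (delta_mx j 0 : 'cV[C]_N)) 0 0 = M i j.
Proof.
have -> : ctmx (delta_mx i 0 : 'cV[C]_N) = delta_mx 0 i.
  by apply/matrixP => a b; rewrite ctmxE !mxE ord1 !eqxx andbT rmorph_nat.
by rewrite -rowE -colE !mxE.
Qed.

Lemma bil_delta' N (M : 'M[C]_N) (i j : 'I_N) :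
  ctmx (delta_mx i 0 : 'cV[C]_N) *m M *m (delta_mx j 0 : 'cV[C]_N) = (M i j)%:M.
Proof. by apply/matrixP => a b; rewrite !ord1 bil_delta mxE eqxx mulr1n. Qed.

Lemma psd_zero_diag N (M : 'M[C]_N) (i j : 'I_N) : psd M -> M i i = 0 -> M i j = 0.
Proof.
move=> [hM hq] hii.
have [<-//|nij] := eqVneq i j.
set a := M i j.
have hji : M j i = a^*.
  by move: hM => /matrixP /(_ j i); rewrite ctmxE => <-.
have hjj : M j j \is Num.real.
  by apply/CrealP; move: hM => /matrixP /(_ j j); rewrite ctmxE.
apply/eqP/negPn/negP => an0.
set r := (M j j + 1) / (2 * `|a| ^+ 2).
have rr : r \is Num.real.
  by rewrite rpredM ?rpredV ?rpredD ?rpred1 ?rpredM ?rpred_nat ?realX ?normr_real.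
set t := - a * r.
have := hq (t *: delta_mx i 0 + delta_mx j 0).
rewrite ctmxD ctmxZ !mulmxDl !mulmxDr -!scalemxAl -!scalemxAr !bil_delta' !mxE !eqxx !mulr1n.
rewrite hii hji -/a.
suff -> : t^* * (t * 0) + t^* * a + (t * a^* + M j j) = -1 by rewrite ler0N1.
have a2 : a * a^* != 0 by rewrite mulf_neq0 // conjC_eq0.
rewrite /t rmorphM rmorphN /= (conj_Creal rr) /r normCK.
field; rewrite an0 andbT /=; by rewrite conjC_eq0.
Qed.


Lemma pd_factor N (X : 'M[C]_N) : pd X -> exists T, T \in unitmx /\ X = ctmx T *m T.
Proof.
move=> [hX hq].
have hs := herm_hermsym hX.
have /orthomx_spectralP HE := hermitian_normalmx hs.
move: HE; set P := spectralmx X; set d := spectral_diag X => HE.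
have Pu : P \is unitarymx := spectral_unitarymx X.
have PU : P \in unitmx := spectral_unit X.
have iP : invmx P = ctmx P by rewrite invmx_unitary // ctmx_tc.
clearbody P d.
have dpos : forall i, 0 < d 0 i.
  move=> i; have := hq (ctmx P *m delta_mx i 0).
  rewrite HE ctmxM ctmxK -iP !mulmxA !mulmxK // bil_delta mxE eqxx mulr1n.
  apply; apply/eqP => h; have := congr1 (mulmx P) h.
  rewrite mulmxA mulmxV // mul1mx mulmx0 => /matrixP/(_ i 0).
  by rewrite !mxE !eqxx /= => /eqP; rewrite oner_eq0.
set s := \row_i sqrtC (d 0 i).
have sr : forall i, (s 0 i)^* = s 0 i.
  by move=> i; rewrite mxE; apply/conj_Creal/ger0_real; rewrite sqrtC_ge0 ltW.
exists (diag_mx s *m P); split.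
  rewrite unitmx_mul PU andbT unitmxE det_diag unitfE; apply/prodf_neq0 => i _.
  by rewrite mxE sqrtC_eq0 gt_eqF.
have cs : ctmx (diag_mx s) = diag_mx s.
  apply/matrixP => a b; rewrite ctmxE !mxE.
  have [->|nab] := eqVneq a b.
    by rewrite !mulr1n; have := sr b; rewrite mxE.
  by rewrite !mulr0n rmorph0.
rewrite ctmxM cs HE iP !mulmxA; congr (_ *m _); rewrite -mulmxA; congr (_ *m _).
rewrite mulmx_diag; congr diag_mx; apply/rowP => i; rewrite !mxE -expr2 sqrtCK //.
Qed.


Lemma QWQ n m (A : 'M[C]_n) (B : 'M[C]_(n, m)) (Cm : 'M[C]_(m, n)) (D : 'M[C]_m)
  (T : 'M[C]_n) : T \in unitmx ->
  let Q : 'M[C]_(n + n + m) := block_mx (block_mx T 0 0 T) 0 0 1%:M in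
  ctmx Q *m Wtilde (T *m A *m invmx T) (T *m B) (Cm *m invmx T) D 1%:M *m Q
  = Wtilde A B Cm D (ctmx T *m T).
Proof.
move=> TU Q; rewrite /Q /Wtilde !ctmx_block !ctmx0 !ctmx1.
rewrite !mulmx_block !mul0mx !mulmx0 !add0r !addr0 !mul1mx !mulmx1.
rewrite !mulmx_block !mul_block_col !mul_row_block.
rewrite !mul0mx !mulmx0 !add0r !addr0 ?mul1mx ?mulmx1.
have cTU : ctmx T \in unitmx by rewrite ctmx_unit.
congr block_mx; first congr block_mx.
- by rewrite !mulmxA mulmxKV.
- by rewrite !ctmxM ctmx_inv !mulmxA mulmxV // mul1mx.
- congr col_mx; first by rewrite mulmxA.
  by rewrite ctmxM ctmx_inv mulmxA mulmxV // mul1mx.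
- congr row_mx; first by rewrite ctmxM !mulmxA.
  by rewrite mulmxKV.
Qed.



Definition Smx n m (T : 'M[C]_n) : 'M[C]_(n + n + m) :=
  block_mx (block_mx T 0 0 T) 0 0 (sqrtC 2)%:M.

Lemma sqrt2_real : sqrtC (2 : C) \is Num.real.
Proof. by apply/ger0_real; rewrite sqrtC_ge0 ler0n. Qed.

Lemma sqrt2_neq0 : sqrtC (2 : C) != 0.
Proof. by rewrite sqrtC_eq0 pnatr_eq0. Qed.

Lemma Smx_unit n m (T : 'M[C]_n) : T \in unitmx -> Smx m T \in unitmx.
Proof.
move=> TU; rewrite /Smx unitmxE !det_ublock det_scalar !unitrM unitrX ?unitfE ?sqrt2_neq0 //.
by move: TU; rewrite unitmxE unitfE => ->.
Qed.

Lemma key n m (A : 'M[C]_n) (B : 'M[C]_(n, m)) (Cm : 'M[C]_(m, n)) (D : 'M[C]_m)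
  (T : 'M[C]_n) (xi : C) : T \in unitmx ->
  ctmx (Smx m T) *m (Ds C n m *m Wtilde (T *m A *m invmx T) (T *m B) (Cm *m invmx T) D 1%:M
     *m Ds C n m - xi%:M) *m Smx m T
  = Wtilde A B Cm D (ctmx T *m T) - xi *: diagXX2 m (ctmx T *m T).
Proof.
move=> TU.
have DsS : Ds C n m *m Smx m T = block_mx (block_mx T 0 0 T) 0 0 1%:M.
  rewrite /Ds /Smx mulmx_block !mul0mx !mulmx0 !addr0 !add0r mul1mx.
  by rewrite mul_scalar_mx scale_scalar_mx mulVf ?sqrt2_neq0.
have cDs : ctmx (Ds C n m) = Ds C n m.
  rewrite /Ds ctmx_block !ctmx0 ctmx1 ctmx_scalar conj_Creal //.
  by rewrite rpredV sqrt2_real.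
have SS : ctmx (Smx m T) *m Smx m T = diagXX2 m (ctmx T *m T).
  rewrite /Smx /diagXX2 ctmx_block !ctmx0 ctmx_block !ctmx0 ctmx_scalar.
  rewrite !mulmx_block !mul0mx !mulmx0 !addr0 !add0r.
  by rewrite mul_scalar_mx scale_scalar_mx (conj_Creal sqrt2_real) -expr2 sqrtCK.
rewrite mulmxBr mulmxBl mul_mx_scalar -scalemxAl SS; congr (_ - _).
rewrite -(QWQ A B Cm D TU) /= -DsS ctmxM cDs !mulmxA.
by [].
Qed.


Lemma Ds_ct n m : ctmx (Ds C n m) = Ds C n m.
Proof.
rewrite /Ds ctmx_block !ctmx0 ctmx1 ctmx_scalar conj_Creal //.
by rewrite rpredV sqrt2_real.
Qed.

Lemma Wtilde_herm n m (A : 'M[C]_n) (B : 'M[C]_(n, m)) (Cm : 'M[C]_(m, n)) (D : 'M[C]_m)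
  (X : 'M[C]_n) : hermitian X -> hermitian (Wtilde A B Cm D X).
Proof.
rewrite /hermitian /Wtilde => hX.
rewrite !ctmx_block ctmx_col ctmx_row !ctmxM !ctmxK hX ctmxD ctmxK addrC.
by [].
Qed.

End Aux.

Theorem theorem5p1 (C : numClosedFieldType) (n m : nat) (npos : (0 < n)%N)
  (A : 'M[C]_n) (B : 'M[C]_(n, m)) (Cm : 'M[C]_(m, n)) (D : 'M[C]_m)
  (X : 'M[C]_n) :
  minimal A B Cm -> passive A B Cm D -> Xgt A B Cm D X ->
  let holds := fun xi : C =>
    loewner_ge (Wtilde A B Cm D X) (xi *: diagXX2 m X) in
  let is_max := fun xi : C =>
    [/\ xi \is Num.real, holds xi &
        forall xi' : C, xi' \is Num.real -> holds xi' -> xi' <= xi] in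
  exists xistar : C,
    [/\ is_max xistar,
        (forall y : C, is_max y -> y = xistar),
        xistar < 1 &
        forall T : 'M[C]_n, T \in unitmx -> X = ctmx T *m T ->
          is_lambda_min
            (Ds C n m *m Wtilde (T *m A *m invmx T) (T *m B) (Cm *m invmx T) D 1%:M
               *m Ds C n m) xistar].
Proof.
move=> Hmin _ [hX [_ pdX]] holds is_max.
have [T0 [T0U XE]] := pd_factor pdX.
pose H := fun T : 'M[C]_n =>
  Ds C n m *m Wtilde (T *m A *m invmx T) (T *m B) (Cm *m invmx T) D 1%:M *m Ds C n m.
have Nn : (0 < n + n + m)%N by rewrite !addn_gt0 npos.
have Hherm : forall T, hermitian (H T).
  move=> T; rewrite /hermitian /H !ctmxM Ds_ct !mulmxA.
  have := Wtilde_herm (T *m A *m invmx T) (T *m B) (Cm *m invmx T) D (ctmx1 C n).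
  by rewrite /hermitian => ->.
have hold_iff : forall T, T \in unitmx -> X = ctmx T *m T ->
    forall xi, holds xi <-> psd (H T - xi%:M).
  move=> T TU XT xi; rewrite /holds /loewner_ge XT -(key A B Cm D xi TU).
  exact: (iff_sym (psd_congr _ (Smx_unit m TU))).
have [l [lr leig lmin lpsd]] := herm_min Nn (Hherm T0).
have hl : forall xi, xi \is Num.real -> holds xi <-> xi <= l.
  move=> xi xr; split => h.
    exact: (lpsd xi xr).1 ((hold_iff T0 T0U XE xi).1 h).
  exact: (hold_iff T0 T0U XE xi).2 ((lpsd xi xr).2 h).
have ismax : is_max l.
  split => //; first exact: (hl l lr).2 (lexx l).
  by move=> xi xr /(hl xi xr).
exists l; split => //.
- move=> y [yr hy ymax]; apply/le_anti.
  rewrite (hl y yr).1 //=.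
  by apply: ymax => //; exact: (hl l lr).2 (lexx l).
- rewrite real_ltNge ?rpred1 //; apply/negP => h1.
  have := (hl 1 (rpred1 _)).2 h1; rewrite /holds /loewner_ge scale1r => hp.
  move: hp; rewrite /Wtilde /diagXX2 opp_block_mx add_block_mx opp_block_mx add_block_mx.
  move=> hp.
  have XU : X \in unitmx by rewrite XE unitmx_mul ctmx_unit T0U.
  have XA : X *m A = 0.
    apply/matrixP => i j.
    have := psd_zero_diag (i:=lshift m (lshift n i)) (lshift m (rshift n j)) hp.
    rewrite !block_mxEul block_mxEur subrr mxE => /(_ erefl).
    by rewrite subr0 => ->; rewrite mxE.
  have XB : X *m B = 0.
    apply/matrixP => i j.
    have := psd_zero_diag (i:=lshift m (lshift n i)) (rshift (n + n) j) hp.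
    rewrite !block_mxEul block_mxEur.
    rewrite subrr mxE subr0 col_mxEu => /(_ erefl) ->; by rewrite mxE.
  have A0 : A = 0 by rewrite -(mulKmx XU A) XA mulmx0.
  have B0 : B = 0 by rewrite -(mulKmx XU B) XB mulmx0.
  have [+ _] := Hmin 0; rewrite A0 B0.
  have -> : (0 : C)%:M = 0 :> 'M[C]_n by apply/matrixP => i j; rewrite !mxE mul0rn.
  by rewrite subr0 row_mx0 mxrank0 => e; move: npos; rewrite -e.
- move=> T TU XT.
  have [lT [lTr lTeig lTmin lTpsd]] := herm_min Nn (Hherm T).
  have e1 : lT <= l.
    exact: (hl lT lTr).1 ((hold_iff T TU XT lT).2 ((lTpsd lT lTr).2 (lexx lT))).
  have e2 : l <= lT.
    exact: (lTpsd l lr).1 ((hold_iff T TU XT l).1 ((hl l lr).2 (lexx l))).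
  have -> : l = lT by apply/le_anti; rewrite e1 e2.
  by split.
Qed.
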